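(* (Euler's formula for the number of spanning trees.) Let $G$ be a connected graph in which each edge $e_i$ has end points $p_i,q_i$. For any $s,t\in V(G)$, $$t(G_{st})=k\,t(G)+\frac{1}{4t(G)}\sum_{\substack{e_i\in E(G)\\ e_i\text{ not a bridge}}}\big[t(G_{p_is})-t(G_{p_it})-t(G_{q_is})+t(G_{q_it})\big]^2,$$ where $k$ is the number of bridges lying on any path connecting $s$ and $t$. Equivalently, $$t(G_{st})=\frac{1}{4t(G)}\sum_{e_i\in E(G)}\big[t(G_{p_is})-t(G_{p_it})-t(G_{q_is})+t(G_{q_it})\big]^2.$$
   Context: Graphs are finite and may have multiple edges and loops; $t(H)$ is the number of spanning trees of $H$; a graph with one vertex has $t=1$. $G_{xy}$ denotes the graph obtained from $G$ by identifying vertices $x$ and $y$, with the convention $t(G_{xx}):=0$. A bridge is an edge whose deletion disconnects $G$. *)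

(* Defs.v *)
From HB Require Import structures.
From mathcomp Require Import all_boot all_order all_algebra.
Set Implicit Arguments. Unset Strict Implicit. Unset Printing Implicit Defensive.
Import Order.TTheory GRing.Theory Num.Theory.

Record mgraph := MGraph {
  vert : finType;
  edge : finType;
  ep1 : edge -> vert;
  ep2 : edge -> vert }.

Section Graphs.
Variable G : mgraph.

Definition adj (F : {set edge G}) : rel (vert G) := fun u v =>
  [exists e in F, ((ep1 e == u) && (ep2 e == v)) || ((ep1 e == v) && (ep2 e == u))].

Definition spans (F : {set edge G}) : bool :=
  [forall u, forall v, connect (adj F) u v].

(* (V(G), F) is a spanning tree: connected and acyclic, where acyclicity of a
   connected (multi)graph is expressed as: every edge is a bridge of it
   (a loop or an edge lying on a cycle is never a bridge). *)
Definition is_spanning_tree (F : {set edge G}) : bool :=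
  spans F && [forall e in F, ~~ spans (F :\ e)].

Definition ntrees : nat := #|[set F : {set edge G} | is_spanning_tree F]|.

Definition connectedG : bool := spans [set: edge G].

Definition is_bridge (e : edge G) : bool := ~~ spans ([set: edge G] :\ e).

(* deleting e separates s from t (for a bridge e of a connected graph this
   means exactly that e lies on every/any s-t path) *)
Definition separates (e : edge G) (s t : vert G) : bool :=
  ~~ connect (adj ([set: edge G] :\ e)) s t.

(* G_{xy} for x != y: vertex y is identified with x. Vertex set V \ {y},
   each end point equal to y is redirected to x; edges are unchanged. *)
Definition ident (x y : vert G) (H : x != y) : mgraph :=
  let W := {v : vert G | v != y} in
  let m := fun v : vert G => insubd (exist (fun v => v != y) x H) v : W in
  @MGraph W (edge G) (fun e => m (ep1 e)) (fun e => m (ep2 e)).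

End Graphs.

(* t(G_{xy}), with the convention t(G_{xx}) := 0 *)
Definition tid (G : mgraph) (x y : vert G) : nat :=
  match (x != y) as b return (x != y) = b -> nat with
  | true => fun H => ntrees (ident H)
  | false => fun _ => 0
  end (erefl _).

(* Main.v *)
Require Import Defs.
From mathcomp Require Import all_boot all_order all_algebra.
Import Order.TTheory GRing.Theory Num.Theory.
Set Implicit Arguments. Unset Strict Implicit. Unset Printing Implicit Defensive.

Section Basic.
Variable G : mgraph.
Local Notation V := (vert G).
Local Notation E := (edge G).
Implicit Types (F : {set E}) (e f : E) (a b c d u v w x y : V).

Definition cn (F : {set E}) := connect (adj F).

Lemma adj_sym F : symmetric (adj F).
Proof. move=> u v; rewrite /adj; apply: eq_existsb => e; by rewrite orbC. Qed.

Lemma cnC F a b : cn F a b = cn F b a.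
Proof. by rewrite /cn (sym_connect_sym (adj_sym F)). Qed.

Lemma cnT F a b c : cn F a b -> cn F b c -> cn F a c.
Proof. exact: connect_trans. Qed.

Lemma cnxx F a : cn F a a.
Proof. exact: connect0. Qed.

Lemma adjP F a b : reflect (exists2 e, e \in F & ((ep1 e == a) && (ep2 e == b)) || ((ep1 e == b) && (ep2 e == a))) (adj F a b).
Proof. exact: (iffP exists_inP). Qed.

Lemma adj_edge F e : e \in F -> adj F (ep1 e) (ep2 e).
Proof. by move=> eF; apply/adjP; exists e => //; rewrite !eqxx. Qed.

Lemma cn_edge F e : e \in F -> cn F (ep1 e) (ep2 e).
Proof. by move=> eF; apply: connect1; apply: adj_edge. Qed.

Lemma adj_sub F F' a b : F \subset F' -> adj F a b -> adj F' a b.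
Proof. by move=> /subsetP sub /adjP [e /sub eF h]; apply/adjP; exists e. Qed.

Lemma cn_sub F F' a b : F \subset F' -> cn F a b -> cn F' a b.
Proof. by move=> sub; apply: connect_sub => u v /(adj_sub sub) /connect1. Qed.

Lemma cn_ind F (P : V -> Prop) a b : (forall w w', P w -> adj F w w' -> P w') -> P a -> cn F a b -> P b.
Proof.
move=> step Pa /connectP [p pth ->].
elim: p a Pa pth => //= c p IH a Pa /andP [h pth].
exact: IH (step _ _ Pa h) pth.
Qed.

Definition at_ (e : E) v := (ep1 e == v) || (ep2 e == v).
Definition oth (e : E) v := if ep1 e == v then ep2 e else ep1 e.

Lemma atP e v : at_ e v -> (ep1 e = v /\ ep2 e = oth e v) \/ (ep2 e = v /\ ep1 e = oth e v).
Proof. rewrite /at_ /oth; case: eqP => [->|_] /=; [by left| by move/eqP; right]. Qed.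

Lemma cn_at F e v : e \in F -> at_ e v -> cn F v (oth e v).
Proof.
move=> eF /atP [[h1 h2]|[h1 h2]]; rewrite -h2 -h1; last rewrite cnC; exact: cn_edge.
Qed.

Lemma cn_split F e a b : cn F a b ->
  [\/ cn (F :\ e) a b, cn (F :\ e) a (ep1 e) /\ cn (F :\ e) (ep2 e) b
    | cn (F :\ e) a (ep2 e) /\ cn (F :\ e) (ep1 e) b].
Proof.
move=> hab; pattern b; apply: (cn_ind _ _ hab); last by constructor 1; apply: cnxx.
move=> w w' Pw /adjP [f fF hf].
case: (eqVneq f e) => [fe|fne].
  subst f; case/orP: hf => /andP [/eqP h1 /eqP h2]; subst w w'.
    case: Pw => [h|[h1 h2]|[h1 h2]].
    - by constructor 2; split => //; apply: cnxx.
    - by constructor 2; split => //; apply: cnxx.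
    - by constructor 1.
  case: Pw => [h|[h1 h2]|[h1 h2]].
  - by constructor 3; split => //; apply: cnxx.
  - by constructor 1.
  - by constructor 3; split => //; apply: cnxx.
have ww' : cn (F :\ e) w w'.
  by apply: connect1; apply/adjP; exists f => //; rewrite !inE fne.
case: Pw => [h|[h1 h2]|[h1 h2]].
- by constructor 1; apply: cnT ww'.
- by constructor 2; split => //; apply: cnT ww'.
- by constructor 3; split => //; apply: cnT ww'.
Qed.

Lemma cn_del F e a b : cn (F :\ e) (ep1 e) (ep2 e) -> cn F a b -> cn (F :\ e) a b.
Proof.
move=> pq /(cn_split e) [h|[h1 h2]|[h1 h2]] //.
- exact: cnT (cnT h1 pq) h2.
- by apply: cnT (cnT h1 _) h2; rewrite cnC.
Qed.

Lemma cn_at_split F e v c d : at_ e v -> cn F c d ->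
  [\/ cn (F :\ e) c d, cn (F :\ e) c v /\ cn (F :\ e) (oth e v) d
    | cn (F :\ e) c (oth e v) /\ cn (F :\ e) v d].
Proof.
move=> /atP [[h1 h2]|[h1 h2]] /(cn_split e); rewrite h1 h2 //.
by case=> [h|h|h]; [constructor 1|constructor 3|constructor 2].
Qed.

Lemma cn_add F e a b : e \in F -> cn (F :\ e) a (ep1 e) -> cn (F :\ e) (ep2 e) b -> cn F a b.
Proof.
move=> eF h1 h2; apply: cnT (cn_sub (subsetDl _ _) h1) _.
exact: cnT (cn_edge eF) (cn_sub (subsetDl _ _) h2).
Qed.

Definition acyc (F : {set E}) := [forall e in F, ~~ cn (F :\ e) (ep1 e) (ep2 e)].
Definition tree F := spans F && acyc F.

Lemma acyc_at F e v : acyc F -> e \in F -> at_ e v -> ~~ cn (F :\ e) v (oth e v).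
Proof.
move=> /forall_inP /(_ e) h eF /atP [[h1 h2]|[h1 h2]]; rewrite -h2 -h1; last rewrite cnC; exact: h.
Qed.

Lemma st_tree F : is_spanning_tree F = tree F.
Proof.
rewrite /is_spanning_tree /tree; case sF: (spans F) => //=.
apply: eq_forallb_in => e eF; congr (~~ _).
apply/idP/idP => [/forallP/(_ (ep1 e))/forallP/(_ (ep2 e)) //| h].
apply/forallP=> u; apply/forallP => v; apply: cn_del h _.
by move: sF => /forallP/(_ u)/forallP/(_ v).
Qed.

Lemma spans_cn F a b : spans F -> cn F a b.
Proof. by move=> /forallP/(_ a)/forallP/(_ b). Qed.


Lemma path_avoid F e v z r : at_ e v -> v \notin z :: r -> path (adj F) z r -> path (adj (F :\ e)) z r.
Proof.
move=> ev; elim: r z => //= w r IH z vzr /andP [h pr].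
have := vzr; rewrite !inE !negb_or => /and3P [vz vw _].
apply/andP; split; last by apply: IH => //; move: vzr; rewrite inE negb_or => /andP [].
move: h => /adjP [f fF hf]; apply/adjP; exists f => //; rewrite !inE fF andbT.
apply/eqP => fe; subst f.
move: ev; rewrite /at_; case/orP: hf => /andP [/eqP -> /eqP ->];
  by rewrite ![_ == v]eq_sym (negbTE vz) (negbTE vw).
Qed.

Lemma exists_sep F v a : acyc F -> cn F v a -> v != a ->
  exists e, [/\ e \in F, at_ e v, cn (F :\ e) (oth e v) a & ~~ cn (F :\ e) v a].
Proof.
move=> ac /connectP [p pth ->] nva.
case: (shortenP pth) nva => p' pth' uq _ nva.
case: p' pth' uq nva => [|z r] /=; first by rewrite eqxx.
move=> /andP [h pr] uq _.
have vzr : v \notin z :: r by move: uq => /andP [].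
move: h => /adjP [e eF he].
have ev : at_ e v by rewrite /at_; case/orP: he => /andP [/eqP -> /eqP ->]; rewrite eqxx ?orbT.
have oz : oth e v = z.
  rewrite /oth; case/orP: he => /andP [/eqP -> /eqP ->]; rewrite ?eqxx //.
  by move: vzr; rewrite inE negb_or eq_sym => /andP [/negbTE ->].
have za : cn (F :\ e) z (last z r).
  by apply/connectP; exists r => //; apply: path_avoid ev vzr pr.
exists e; split => //; first by rewrite oz.
apply/negP => va; have := acyc_at ac eF ev; rewrite oz.
by rewrite (cnT va) // cnC.
Qed.

Lemma uniq_sep F v a e1 e2 : acyc F -> cn F v a -> e1 \in F -> e2 \in F ->
  at_ e1 v -> at_ e2 v -> ~~ cn (F :\ e1) v a -> ~~ cn (F :\ e2) v a -> e1 = e2.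
Proof.
move=> ac va e1F e2F ev1 ev2 nv1 nv2.
case: (eqVneq e1 e2) => // ne; exfalso.
have ac1 := acyc_at ac e1F ev1.
have y1a : cn (F :\ e1) (oth e1 v) a.
  case: (cn_at_split ev1 va) => [h|[_ h]|[h _]] //.
  - by rewrite h in nv1.
  - by rewrite h in ac1.
case: (cn_at_split ev2 y1a) => [h|[h _]|[h1 h2]].
- have h' : cn (F :\ e2) (oth e1 v) a.
    by apply: cn_sub h; apply: setSD; apply: subsetDl.
  have e1F2 : e1 \in F :\ e2 by rewrite !inE ne e1F.
  by move: nv2; rewrite (cnT (cn_at e1F2 ev1) h').
- move: ac1; rewrite cnC; have -> // : cn (F :\ e1) (oth e1 v) v.
  by apply: cn_sub h; apply: subsetDl.
- by move: nv1; rewrite (cn_sub (subsetDl _ _) h2).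
Qed.

Lemma card_sep F v a : acyc F -> cn F v a ->
  #|[set e in F | at_ e v && ~~ cn (F :\ e) v a]| = (v != a).
Proof.
move=> ac va; case: (eqVneq v a) => [<-|nva].
  apply/eqP; rewrite cards_eq0; apply/eqP/setP => e; rewrite !inE cnxx.
  by rewrite andbF andbF.
have [e0 [e0F ev0 _ n0]] := exists_sep ac va nva.
rewrite (_ : [set e in F | _] = [set e0]) ?cards1 //.
apply/setP => e; rewrite !inE; apply/idP/eqP => [/and3P [eF ev ne]| ->].
  exact: uniq_sep ac va eF e0F ev ev0 ne n0.
by rewrite e0F ev0 n0.
Qed.

Lemma tree_split F e : tree F -> e \in F ->
  (forall w, cn (F :\ e) w (ep1 e) || cn (F :\ e) w (ep2 e)) /\ ~~ cn (F :\ e) (ep1 e) (ep2 e).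
Proof.
move=> /andP [sp ac] eF; split; last by move: ac => /forall_inP; apply.
move=> w; case: (cn_split e (spans_cn (ep1 e) w sp)) => [h|[_ h]|[_ h]].
- by rewrite (cnC _ w (ep1 e)) h.
- by rewrite (cnC _ w (ep2 e)) h orbT.
- by rewrite (cnC _ w (ep1 e)) h.
Qed.

Lemma two_class F p q : (forall w, cn F w p || cn F w q) -> ~~ cn F p q ->
  forall w, cn F w q = ~~ cn F w p.
Proof.
move=> cov npq w; case wp: (cn F w p) => /=.
  by apply/negP => wq; move: npq; rewrite (cnT _ wq) // cnC.
by have := cov w; rewrite wp.
Qed.

Lemma two_class_cn F p q : (forall w, cn F w p || cn F w q) -> ~~ cn F p q ->
  forall a c, cn F a c = (cn F a p == cn F c p).
Proof.
move=> cov npq a c; have tc := two_class cov npq.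
apply/idP/eqP => [ac|].
  case ap: (cn F a p); first by rewrite cnC in ac; rewrite (cnT ac ap).
  apply/esym/negbTE/negP => cp; move: ap; rewrite (cnT ac cp) //.
case ap: (cn F a p) => cp.
  by apply: cnT ap _; rewrite cnC -cp.
have aq : cn F a q by rewrite tc ap.
have cq : cn F c q by rewrite tc -cp.
by apply: cnT aq _; rewrite cnC.
Qed.

End Basic.

Lemma tidN (G : mgraph) (a b : vert G) (H : a != b) : tid a b = ntrees (ident H).
Proof.
rewrite /tid. move: (erefl (a != b)). case: {2 3}(a != b) => E.
  by rewrite (eq_irrelevance E H).
by exfalso; move: E; rewrite H.
Qed.

Lemma tidxx (G : mgraph) (a : vert G) : tid a a = 0.
Proof.
rewrite /tid. move: (erefl (a != a)). case: {2 3}(a != a) => E //.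
by exfalso; have := E; rewrite eqxx.
Qed.

Definition Tab (G : mgraph) (F : {set edge G}) (a b : vert G) :=
  [&& acyc F, [forall w, cn F w a || cn F w b] & ~~ cn F a b].

Section Ident.
Variable G : mgraph.
Local Notation V := (vert G).
Local Notation E := (edge G).
Implicit Types (F : {set E}) (e f : E) (a b c d w : V).
Variables (x y : V) (H : x != y).
Let u0 : {v : V | v != y} := exist _ x H.
Let m (v : V) : {v : V | v != y} := insubd u0 v.

Lemma val_m (v : V) : val (m v) = if v != y then v else x.
Proof. by rewrite /m val_insubd. Qed.
Lemma m_val u : m (val u) = u.
Proof. exact: valKd. Qed.
Lemma mx : m x = u0.
Proof. by apply: val_inj; rewrite val_m H. Qed.
Lemma my : m y = u0.
Proof. by apply: val_inj; rewrite val_m eqxx. Qed.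

Lemma ep1_id (e : edge (ident H)) : @ep1 (ident H) e = m (@ep1 G e).
Proof. by []. Qed.
Lemma ep2_id (e : edge (ident H)) : @ep2 (ident H) e = m (@ep2 G e).
Proof. by []. Qed.

Let rho F a := cn F a x || cn F a y.
Let Q F a b := cn F a b || (rho F a && rho F b).

Lemma rho_cn F a b : cn F a b -> rho F b -> rho F a.
Proof. by move=> ab; case/orP => h; rewrite /rho (cnT ab h) ?orbT. Qed.

Lemma Q_sym F a b : Q F a b -> Q F b a.
Proof. by rewrite /Q cnC andbC. Qed.

Lemma Q_trans F a b c : Q F a b -> Q F b c -> Q F a c.
Proof.
rewrite /Q; case/orP => [ab|/andP [ra rb]]; case/orP => [bc|/andP [rb' rc]].
- by rewrite (cnT ab bc).
- by rewrite (rho_cn ab rb') rc orbT.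
- by rewrite ra (rho_cn _ rb) ?orbT // cnC.
- by rewrite ra rc orbT.
Qed.

Lemma Q_cn F a b : cn F a b -> Q F a b.
Proof. by rewrite /Q => ->. Qed.

Lemma Qm F (v : V) : Q F (val (m v)) v.
Proof.
rewrite val_m; case: ifP => [_|/negbFE/eqP ->]; first exact/Q_cn/cnxx.
by rewrite /Q /rho !cnxx /= !orbT.
Qed.

Lemma adj'_Q F u v : @adj (ident H) F u v -> Q F (val u) (val v).
Proof.
move=> /existsP [e /andP [eF he]]; rewrite ep1_id ep2_id in he.
have pq : Q F (@ep1 G e) (@ep2 G e) by apply/Q_cn/cn_edge.
case/orP: he => /andP [/eqP <- /eqP <-].
  exact: Q_trans (Qm _ _) (Q_trans pq (Q_sym (Qm _ _))).
exact: Q_trans (Qm _ _) (Q_trans (Q_sym pq) (Q_sym (Qm _ _))).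
Qed.

Lemma cn'_Q F u v : @cn (ident H) F u v -> Q F (val u) (val v).
Proof.
move=> uv; pattern v; apply: (cn_ind _ _ uv); last exact/Q_cn/cnxx.
by move=> w w' Qw /adj'_Q; apply: Q_trans.
Qed.

Lemma cn_cn' F a b : cn F a b -> @cn (ident H) F (m a) (m b).
Proof.
move=> ab; pattern b; apply: (cn_ind _ _ ab); last exact: cnxx.
move=> w w' h /adjP [e eF he]; apply: cnT h _; apply: connect1.
apply/existsP; exists e; rewrite eF /=.
by case/orP: he => /andP [/eqP -> /eqP ->]; rewrite !eqxx ?orbT.
Qed.

Lemma Q_cn' F a b : Q F a b -> @cn (ident H) F (m a) (m b).
Proof.
case/orP => [/cn_cn' //|/andP [ra rb]].
have r0 : forall c, rho F c -> @cn (ident H) F (m c) u0.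
  by move=> c /orP [] /cn_cn'; rewrite ?mx ?my.
by apply: cnT (r0 _ ra) _; rewrite cnC; apply: r0.
Qed.

Lemma spans'E F : @spans (ident H) F = [forall w, cn F w x || cn F w y].
Proof.
apply/idP/idP => [sp|/forallP cov].
  apply/forallP => w; case: (eqVneq w y) => [->|wy]; first by rewrite cnxx orbT.
  have := cn'_Q (@spans_cn (ident H) F (m w) u0 sp); rewrite val_m wy /= /Q /rho.
  by case/orP => [->|/andP [-> _]].
apply/forallP => u; apply/forallP => v; rewrite -(m_val u) -(m_val v).
by apply: Q_cn'; rewrite /Q /rho cov (cov (val v)) orbT.
Qed.

Lemma ident_tree F : @is_spanning_tree (ident H) F = Tab F x y.
Proof.
rewrite /is_spanning_tree /Tab spans'E.
rewrite (@eq_forallb_in _ _ _ (fun e => ~~ [forall w, cn (F :\ e) w x || cn (F :\ e) w y])); last first.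
  by move=> e _; rewrite spans'E.
case cov: [forall w, _] => /=; last by rewrite andbF.
move/forallP: cov => cov.
apply/idP/idP => [/forall_inP h|/andP [ac nxy]].
  have ac : acyc F.
    apply/forall_inP => e eF; apply/negP => pq; apply: (negP (h e eF)).
    by apply/forallP => w; have := cov w; case/orP => /(cn_del pq) ->; rewrite ?orbT.
  rewrite ac /=; apply/negP => xy.
  have [e [eF ex oy nx]] := exists_sep ac xy H.
  apply: (negP (h e eF)); apply/forallP => w.
  have wx : cn F w x by have := cov w; case/orP => // wy; apply: cnT wy _; rewrite cnC.
  case: (cn_at_split ex wx) => [->|[-> _]|[wo _]] //.
  by rewrite (cnT wo oy) orbT.
apply/forall_inP => e eF; apply/negP => /forallP cov'.
have npq : ~~ cn (F :\ e) (ep1 e) (ep2 e) by move/forall_inP: ac; apply.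
have := cov' (ep1 e); have := cov' (ep2 e).
case/orP => qz; case/orP => pz.
- by move: npq; rewrite (cnT pz) // cnC.
- move: nxy; rewrite cnC (cn_add eF _ qz) //.
  by rewrite cnC.
- move: nxy; rewrite (cn_add eF _ qz) //.
  by rewrite cnC.
- by move: npq; rewrite (cnT pz) // cnC.
Qed.

End Ident.

Lemma tidE (G : mgraph) (a b : vert G) : tid a b = #|[set F : {set edge G} | Tab F a b]|.
Proof.
case: (eqVneq a b) => [<-|H].
  rewrite tidxx; apply/esym/eqP; rewrite cards_eq0; apply/eqP/setP => F.
  by rewrite !inE /Tab cnxx !andbF.
rewrite (tidN H) /ntrees; apply: eq_card => F; rewrite !inE.
exact: ident_tree.
Qed.


From mathcomp Require Import all_boot all_order all_algebra.
Import Order.TTheory GRing.Theory Num.Theory.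
Set Implicit Arguments. Unset Strict Implicit. Unset Printing Implicit Defensive.
From mathcomp Require Import ring.
Local Open Scope ring_scope.

Lemma card_sum (T : finType) (P : pred T) : (#|[set x | P x]|%:R : rat) = \sum_x (P x)%:R.
Proof.
rewrite -sum1_card natr_sum big_mkcond /=; apply: eq_bigr => i _; rewrite inE.
by case: (P i).
Qed.

Section Main.
Variable G : mgraph.
Local Notation V := (vert G).
Local Notation E := (edge G).
Implicit Types (F : {set E}) (e f : E) (a b c d u v w : V).
Variables (s t : V).

Lemma Tab_sym F a b : Tab F a b = Tab F b a.
Proof.
rewrite /Tab cnC; congr [&& _, _ & _]; apply: eq_forallb => w; exact: orbC.
Qed.

Lemma TabX F a0 b0 : Tab F a0 b0 -> forall a b, Tab F a b = ~~ cn F a b.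
Proof.
case/and3P => ac /forallP cov n0 a b; rewrite /Tab ac /=.
case ab: (cn F a b) => /=; first by rewrite andbF.
rewrite andbT; apply/forallP => w.
have tc := two_class_cn cov n0.
move: ab; rewrite (tc a b) (tc w a) (tc w b).
by case: (cn F a a0); case: (cn F b a0); case: (cn F w a0).
Qed.

Definition chi F w : rat := (cn F s w)%:R.
Definition tst F : rat := (Tab F s t)%:R.

Lemma Tab_swap F p a b : Tab F p a -> ~~ Tab F a b -> Tab F p b.
Proof.
move=> h; rewrite !(TabX h) !negbK => ab; apply/negP => pb.
have := h; rewrite (TabX h) => /negP; apply; apply: cnT pb _; by rewrite cnC.
Qed.

Lemma K2 F p : (Tab F p s)%:R - (Tab F p t)%:R = tst F * (1 - 2 * chi F p).
Proof.
rewrite /tst /chi; case st: (Tab F s t).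
  move: (st) => /and3P [_ /forallP cov nst].
  rewrite !(TabX st) (two_class cov nst p) (cnC F s p).
  by case: (cn F p s) => /=; ring.
have -> : Tab F p s = Tab F p t.
  apply/idP/idP => h.
    by apply: Tab_swap h _; rewrite st.
  by apply: Tab_swap h _; rewrite Tab_sym st.
by rewrite subrr mul0r.
Qed.

Lemma tidR a b : ((tid a b)%:R : rat) = \sum_F (Tab F a b)%:R.
Proof. by rewrite tidE card_sum. Qed.

Definition I e := \sum_F tst F * (chi F (ep1 e) - chi F (ep2 e)).

Lemma Dexp e :
  ((tid (ep1 e) s)%:R - (tid (ep1 e) t)%:R - (tid (ep2 e) s)%:R + (tid (ep2 e) t)%:R : rat)
  = -2 * I e.
Proof.
have -> : forall x1 x2 x3 x4 : rat, x1 - x2 - x3 + x4 = (x1 - x2) - (x3 - x4) by move=> *; ring.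
rewrite !tidR -!sumrB /I mulr_sumr; apply: eq_bigr => F _.
rewrite !K2; ring.
Qed.


Lemma setUD F e f : e \notin F -> e != f -> ((e |: F) :\ f) :\ e = F :\ f.
Proof.
move=> eF ef; apply/setP => g; rewrite !inE.
case: (eqVneq g e) => [->|//]; by rewrite (negbTE eF) andbF.
Qed.

Lemma K3 F e : e \notin F -> cn F s (ep1 e) != cn F s (ep2 e) ->
  Tab F s t = tree (e |: F) && ~~ cn F s t.
Proof.
move=> eF dpq.
have sub : F \subset e |: F := subsetU1 _ _.
have eeF : e \in e |: F := setU11 _ _.
have DF : (e |: F) :\ e = F := setU1K eF.
have npq : ~~ cn F (ep1 e) (ep2 e).
  apply/negP => pq; move: dpq; apply/negP; rewrite negbK; apply/eqP.
  apply/idP/idP => h; [exact: cnT h pq | by apply: cnT h _; rewrite cnC].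
apply/idP/idP.
  case/and3P => ac /forallP cov nst; rewrite nst andbT; apply/andP; split.
    suff h : forall w, cn (e |: F) s w.
      by apply/forallP => a; apply/forallP => b; apply: cnT (h b); rewrite cnC.
    have tc := two_class cov nst.
    have ee := cn_edge eeF.
    move=> w; case ws: (cn F w s); first by apply: cn_sub sub _; rewrite cnC.
    have wt : cn F t w by rewrite cnC tc ws.
    case sp: (cn F s (ep1 e)).
      have qt : cn F (ep2 e) t.
        by rewrite tc cnC; move: dpq; rewrite sp; case: (cn F s (ep2 e)).
      apply: cnT (cn_sub sub sp) _; apply: cnT ee _.
      by apply: cn_sub sub _; apply: cnT qt wt.
    have sq : cn F s (ep2 e) by move: dpq; rewrite sp; case: (cn F s (ep2 e)).
    have pt : cn F (ep1 e) t by rewrite tc cnC sp.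
    apply: cnT (cn_sub sub sq) _; apply: cnT (_ : cn _ _ (ep1 e)) _; first by rewrite cnC.
    by apply: cn_sub sub _; apply: cnT pt wt.
  apply/forall_inP => f fF; case: (eqVneq f e) => [->|fe]; first by rewrite DF.
  have fF' : f \in F by move: fF; rewrite in_setU1 (negbTE fe).
  have acf : ~~ cn (F :\ f) (ep1 f) (ep2 f) by move/forall_inP: ac; apply.
  apply/negP => /(cn_split e); rewrite setUD // 1?eq_sym //.
  have sf : F :\ f \subset F := subsetDl _ _.
  have ef := cn_edge fF'.
  case=> [h|[h1 h2]|[h1 h2]]; first by rewrite h in acf.
    move: npq; apply/negP; rewrite negbK.
    apply: cnT (_ : cn F _ (ep1 f)) _; first by rewrite cnC; apply: cn_sub sf h1.
    by apply: cnT ef _; rewrite cnC; apply: cn_sub sf h2.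
  move: npq; apply/negP; rewrite negbK cnC.
  apply: cnT (_ : cn F _ (ep1 f)) _; first by rewrite cnC; apply: cn_sub sf h1.
  by apply: cnT ef _; rewrite cnC; apply: cn_sub sf h2.
case/andP => /andP [sp ac] nst; rewrite /Tab nst andbT.
apply/andP; split.
  apply/forall_inP => f fF.
  have fF' : f \in e |: F by rewrite inE fF orbT.
  have := (forall_inP ac f fF'); apply: contra; apply: cn_sub.
  exact: setSD sub.
have [cov npq'] := tree_split (introT andP (conj sp ac)) eeF.
rewrite DF in cov npq'.
have tc := two_class_cn cov npq'.
apply/forallP => w; move: nst; rewrite (tc w s) (tc w t) (tc s t).
by case: (cn F w _); case: (cn F s _); case: (cn F t _).
Qed.

Lemma KEYe e : I e = \sum_Tr (tree Tr)%:R * ((e \in Tr) && ~~ cn (Tr :\ e) s t)%:R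
   * (chi (Tr :\ e) (ep1 e) - chi (Tr :\ e) (ep2 e)).
Proof.
rewrite /I (bigID (fun F => e \in F)) /= big1 ?add0r; last first.
  move=> F eF; have pq := cn_edge eF; rewrite /chi.
  have -> : cn F s (ep1 e) = cn F s (ep2 e).
    by apply/idP/idP => h; [exact: cnT h pq | by apply: cnT h _; rewrite cnC].
  by rewrite /chi subrr mulr0.
rewrite [in RHS](bigID (fun Tr : {set E} => e \in Tr)) /= [X in _ + X]big1 ?addr0; last first.
  by move=> Tr /negbTE ->; rewrite mulr0 mul0r.
rewrite [in RHS](reindex_onto (fun F => e |: F) (fun Tr => Tr :\ e)) /=; last first.
  by move=> Tr eTr; apply: setD1K.
apply: eq_big => [F|F eF].
  rewrite setU11 /=; apply/idP/eqP => [h|<-]; first by rewrite setU1K.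
  by rewrite setD11.
rewrite setU1K // setU11 /=.
case: (eqVneq (cn F s (ep1 e)) (cn F s (ep2 e))) => [h|h].
  by rewrite /chi h subrr !mulr0.
rewrite /tst (K3 eF h).
by case: (tree _); case: (cn F s t) => /=; ring.
Qed.


Lemma PT_term Tr e v : tree Tr -> e \in Tr ->
  (~~ cn (Tr :\ e) s t)%:R * (chi (Tr :\ e) (ep1 e) - chi (Tr :\ e) (ep2 e))
    * ((ep1 e == v)%:R - (ep2 e == v)%:R)
  = (at_ e v && ~~ cn (Tr :\ e) v t)%:R - (at_ e v && ~~ cn (Tr :\ e) v s)%:R.
Proof.
move=> tr eTr; have [cov npq] := tree_split tr eTr.
move: cov npq; set F' := Tr :\ e => cov npq.
have tc := two_class_cn cov npq.
have pq : ep1 e != ep2 e by apply: contraNneq npq => ->; apply: cnxx.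
have qp : cn F' (ep2 e) (ep1 e) = false by rewrite cnC (negbTE npq).
rewrite /chi /at_ (tc s t) (tc s (ep1 e)) (tc s (ep2 e)) (tc v t) (tc v s) qp cnxx.
case: (eqVneq (ep1 e) v) => [<-|pv].
  rewrite cnxx [ep2 e == ep1 e]eq_sym (negbTE pq).
  by case: (cn F' s (ep1 e)); case: (cn F' t (ep1 e)) => /=; ring.
case: (eqVneq (ep2 e) v) => [<-|qv].
  rewrite qp.
  by case: (cn F' s (ep1 e)); case: (cn F' t (ep1 e)) => /=; ring.
by rewrite /=; ring.
Qed.

Lemma sum_in_card (T : finType) (A : pred T) (P : pred T) :
  \sum_(x | A x) ((P x)%:R : rat) = #|[set x | A x && P x]|%:R.
Proof.
rewrite card_sum big_mkcond; apply: eq_bigr => x _; by case: (A x).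
Qed.

Lemma PT Tr v : tree Tr ->
  \sum_e ((e \in Tr) && ~~ cn (Tr :\ e) s t)%:R
     * (chi (Tr :\ e) (ep1 e) - chi (Tr :\ e) (ep2 e))
     * ((ep1 e == v)%:R - (ep2 e == v)%:R)
  = (s == v)%:R - (t == v)%:R.
Proof.
move=> tr; rewrite (bigID (fun e => e \in Tr)) /= [X in _ + X]big1 ?addr0; last first.
  by move=> e /negbTE ->; rewrite !mul0r.
transitivity (\sum_(e | e \in Tr) (((at_ e v && ~~ cn (Tr :\ e) v t)%:R
                                - (at_ e v && ~~ cn (Tr :\ e) v s)%:R) : rat)).
  by apply: eq_bigr => e eTr; rewrite eTr /= -PT_term.
move: (tr) => /andP [sp ac].
rewrite sumrB !sum_in_card !card_sep //; try exact: spans_cn.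
rewrite (eq_sym s v) (eq_sym t v).
by case: (v == s); case: (v == t) => /=; ring.
Qed.

Definition Tn : rat := \sum_(Tr : {set E}) (tree Tr)%:R.

Lemma KEY v : \sum_e I e * ((ep1 e == v)%:R - (ep2 e == v)%:R)
  = Tn * ((s == v)%:R - (t == v)%:R).
Proof.
transitivity (\sum_e \sum_Tr (tree Tr)%:R * (((e \in Tr) && ~~ cn (Tr :\ e) s t)%:R
     * (chi (Tr :\ e) (ep1 e) - chi (Tr :\ e) (ep2 e))
     * ((ep1 e == v)%:R - (ep2 e == v)%:R))).
  apply: eq_bigr => e _; rewrite KEYe mulr_suml; apply: eq_bigr => Tr _; ring.
rewrite exchange_big /= /Tn mulr_suml; apply: eq_bigr => Tr _.
rewrite -mulr_sumr; case tr: (tree Tr); last by rewrite !mul0r.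
by rewrite PT.
Qed.


Lemma sum_delta (f : V -> rat) a b :
  \sum_v f v * ((a == v)%:R - (b == v)%:R) = f a - f b.
Proof.
have h : forall c, \sum_v f v * (c == v)%:R = f c.
  move=> c; rewrite (bigD1 c) //= eqxx mulr1 big1 ?addr0 // => v /negbTE.
  by rewrite eq_sym => ->; rewrite mulr0.
by rewrite -(h a) -(h b) -sumrB; apply: eq_bigr => v _; rewrite mulrBr.
Qed.

Lemma tid_sym a b : tid a b = tid b a.
Proof. by rewrite !tidE; apply: eq_card => F; rewrite !inE Tab_sym. Qed.

Definition Dd e : rat :=
  (tid (ep1 e) s)%:R - (tid (ep1 e) t)%:R - (tid (ep2 e) s)%:R + (tid (ep2 e) t)%:R.

Lemma energy : \sum_e Dd e ^+ 2 = 4 * Tn * (tid s t)%:R.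
Proof.
pose phi v : rat := (tid v s)%:R - (tid v t)%:R.
have Dphi : forall e, Dd e = phi (ep1 e) - phi (ep2 e) by move=> e; rewrite /Dd /phi; ring.
transitivity (\sum_e \sum_v Dd e * (phi v * ((ep1 e == v)%:R - (ep2 e == v)%:R))).
  apply: eq_bigr => e _; rewrite -mulr_sumr sum_delta -Dphi; ring.
rewrite exchange_big /=.
transitivity (\sum_v phi v * (-2 * (Tn * ((s == v)%:R - (t == v)%:R)))).
  apply: eq_bigr => v _; rewrite -KEY mulr_sumr mulr_sumr; apply: eq_bigr => e _.
  rewrite /Dd Dexp; ring.
transitivity (-2 * Tn * \sum_v phi v * ((s == v)%:R - (t == v)%:R)).
  rewrite mulr_sumr; apply: eq_bigr => v _; ring.
rewrite sum_delta /phi !tidxx (tid_sym t s); ring.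
Qed.

Lemma exists_tree : connectedG G -> exists F, tree F.
Proof.
move=> c; case: (@arg_minnP _ [set: E] (@spans G) (fun F => #|F|) c) => F spF minF.
exists F; rewrite -st_tree /is_spanning_tree spF /=.
apply/forall_inP => e eF; apply/negP => sp'.
by move: (minF _ sp'); rewrite [X in (X <= _)%N](cardsD1 e F) eF add1n ltnn.
Qed.

Lemma Tn_neq0 : connectedG G -> Tn != 0.
Proof.
move=> /exists_tree [F tF]; rewrite /Tn -card_sum pnatr_eq0 -lt0n card_gt0.
by apply/set0Pn; exists F; rewrite inE.
Qed.

Lemma cover_del F e : spans F -> forall w, cn (F :\ e) w (ep1 e) || cn (F :\ e) w (ep2 e).
Proof.
move=> sp w; case: (cn_split e (spans_cn (ep1 e) w sp)) => [h|[_ h]|[_ h]].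
- by rewrite (cnC _ w (ep1 e)) h.
- by rewrite (cnC _ w (ep2 e)) h orbT.
- by rewrite (cnC _ w (ep1 e)) h.
Qed.

Lemma bridgeD e : connectedG G -> is_bridge e ->
  Dd e ^+ 2 = 4 * Tn ^+ 2 * (separates e s t)%:R.
Proof.
move=> c br.
set G' := [set: E] :\ e.
have npqG : ~~ cn G' (ep1 e) (ep2 e).
  apply/negP => pq; move: br; rewrite /is_bridge; apply/negP; rewrite negbK.
  apply/forallP => a; apply/forallP => b; apply: cn_del pq _; exact: spans_cn c.
have covG := cover_del e c.
have eTr : forall Tr, tree Tr -> e \in Tr.
  move=> Tr /andP [sp _]; apply/negPn/negP => eT.
  move: br; rewrite /is_bridge; apply/negP; rewrite negbK.
  apply/forallP => a; apply/forallP => b; apply: cn_sub (spans_cn a b sp).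
  by apply/subsetP => f fT; rewrite !inE andbT; apply: contraNneq eT => <-.
have cneq : forall Tr, tree Tr -> forall a b, cn (Tr :\ e) a b = cn G' a b.
  move=> Tr tr a b; have eT := eTr Tr tr.
  have [cov npq] := tree_split tr eT.
  have tc := two_class cov npq; have tcn := two_class_cn cov npq.
  have sub : Tr :\ e \subset G' by apply: setSD; apply: subsetT.
  apply/idP/idP => [/(cn_sub sub) //|ab].
  rewrite tcn; apply/eqP.
  case ap: (cn (Tr :\ e) a (ep1 e)); case bp: (cn (Tr :\ e) b (ep1 e)) => //; exfalso.
    have bq : cn (Tr :\ e) b (ep2 e) by rewrite tc bp.
    move: npqG; apply/negP; rewrite negbK.
    apply: cnT (_ : cn G' _ a) _; first by rewrite cnC; apply: cn_sub sub ap.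
    by apply: cnT ab _; apply: cn_sub sub bq.
  have aq : cn (Tr :\ e) a (ep2 e) by rewrite tc ap.
  move: npqG; apply/negP; rewrite negbK.
  apply: cnT (_ : cn G' _ b) _; first by rewrite cnC; apply: cn_sub sub bp.
  by rewrite cnC in ab; apply: cnT ab _; apply: cn_sub sub aq.
have Ie : I e = Tn * (separates e s t)%:R
     * ((cn G' s (ep1 e))%:R - (cn G' s (ep2 e))%:R).
  rewrite KEYe /Tn !mulr_suml; apply: eq_bigr => Tr _.
  case tr: (tree Tr); last by rewrite !mul0r.
  by rewrite eTr // /chi !cneq.
have tcG := two_class covG npqG.
rewrite /Dd Dexp Ie tcG.
by case: (separates e s t); case: (cn G' s (ep1 e)) => /=; ring.
Qed.

End Main.

Unset Implicit Arguments.
Theorem theorem4p14 (G : mgraph) (s t : vert G) :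
  connectedG G ->
  let T : rat := (ntrees G)%:R in
  let D (e : edge G) : rat :=
    (tid (ep1 e) s)%:R - (tid (ep1 e) t)%:R - (tid (ep2 e) s)%:R + (tid (ep2 e) t)%:R in
  let k : nat := #|[set e : edge G | is_bridge e & separates e s t]| in
  (tid s t)%:R = k%:R * T + (4 * T)^-1 * \sum_(e : edge G | ~~ is_bridge e) D e ^+ 2
  /\ (tid s t)%:R = (4 * T)^-1 * \sum_(e : edge G) D e ^+ 2.
Proof.
move=> c T D k.
have TE : T = Tn G.
  rewrite /T /Tn /ntrees card_sum; apply: eq_bigr => F _; by rewrite st_tree.
have T0 : T != 0 by rewrite TE; apply: Tn_neq0.
have En : \sum_e D e ^+ 2 = 4 * T * (tid s t)%:R by rewrite TE -energy.
have E2 : (tid s t)%:R = (4 * T)^-1 * \sum_(e : edge G) D e ^+ 2.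
  by rewrite En; field; rewrite T0.
split => //.
move: En; rewrite (bigID (@is_bridge G)) /=.
have -> : \sum_(e | is_bridge e) D e ^+ 2 = 4 * T ^+ 2 * k%:R.
  rewrite /k -(sum_in_card (@is_bridge G) (fun e => separates e s t)) mulr_sumr.
  by apply: eq_bigr => e br; rewrite /D TE -(bridgeD s t c br).
move=> En'.
have -> : \sum_(e | ~~ is_bridge e) D e ^+ 2 = 4 * T * (tid s t)%:R - 4 * T ^+ 2 * k%:R.
  by rewrite -En'; ring.
by field; rewrite T0.
Qed.
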